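(* Assume $\bm\lambda\neq0$ and $\bm\mu\neq 0$. (1) For every $k\ge1$, the vector $I^k w$ satisfies $E_{-i,j}\,I^kw=\lambda_i\mu_j\,I^kw$ for all $i\ge0$, $j\ge1$, and $I^kw\notin\mathbb C w$. (2) For every $d\in\mathbb C$, the $\widehat{\mathfrak{gl}}$-submodule $N_d$ of $M_1(\bm\lambda,\bm\mu)$ generated by the vectors $(I-d)I^kw$, $k\ge 0$, is a proper subspace of $M_1(\bm\lambda,\bm\mu)$.
   Context: Let $\widehat{\mathcal A}$ be the Weyl algebra: the unital associative complex algebra generated by $a(r),a^*(r)$ ($r\in\mathbb Z$) with relations $[a(r),a(s)]=[a^*(r),a^*(s)]=0$ and $[a(r),a^*(s)]=\delta_{r+s,0}$. Fix integers $n\ge 0$, $m\ge 1$, $\bm\lambda=(\lambda_0,\dots,\lambda_n)\in\mathbb C^{n+1}$, $\bm\mu=(\mu_1,\dots,\mu_m)\in\mathbb C^m$, and set $\lambda_i=0$ for $i>n$, $\mu_j=0$ for $j>m$. The Whittaker module $M_1(\bm\lambda,\bm\mu)=\widehat{\mathcal A}/\mathcal I$, where $\mathcal I$ is the left ideal generated by $a(i)-\lambda_i$ ($i\ge 0$) and $a^*(j)-\mu_j$ ($j\ge 1$); $w=w_{\bm\lambda,\bm\mu}$ denotes the image of $1$. Normal ordering: $:a(i)a^*(j):$ equals $a^*(j)a(i)$ if $i\ge 0$ and $j\le 0$, and equals $a(i)a^*(j)$ otherwise. For $i,j\in\mathbb Z$, $E_{i,j}:=\,:a(-i)a^*(j):$,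 an operator on $M_1(\bm\lambda,\bm\mu)$ (these give a $\widehat{\mathfrak{gl}}$-module structure of central charge $-1$); $\widehat{\mathfrak{gl}}$-submodules and generation refer to invariance under all $E_{i,j}$. $I:=\sum_{j\in\mathbb Z}E_{j,j}$, a well-defined operator on $M_1(\bm\lambda,\bm\mu)$ commuting with all $E_{i,j}$. *)

(* Defs.v *)
(* Concrete (PBW / polynomial) model of the Whittaker module
   M_1(lambda, mu) of the Weyl algebra. *)
From HB Require Import structures.
From mathcomp Require Import all_boot all_algebra finmap.
From mathcomp Require Import complex Rstruct.
From Stdlib Require Import ClassicalEpsilon.

Set Implicit Arguments.
Unset Strict Implicit.
Unset Printing Implicit Defensive.
Import GRing.Theory Num.Theory.
Local Open Scope ring_scope.

Definition C : numClosedFieldType := (Rdefinitions.R)[i].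

Definition expo := {fsfun int -> nat with 0%N}.

(* A monomial  prod_{r<0} a(r)^{m.1 r} * prod_{s<=0} a*(s)^{m.2 s}.
   (Exponents at r >= 0 in m.1, resp. s >= 1 in m.2, are not used by
   elements of M_1.) *)
Definition mono := (expo * expo)%type.

Definition V := mono -> C.

Definition zero_mono : mono := ([fsfun], [fsfun]).

(* Elements of M_1(lambda,mu) = C[a(r) (r<0), a*(s) (s<=0)] . w :
   finitely supported coefficient functions supported on admissible monomials. *)
Definition admissible (m : mono) : Prop :=
  (forall r : int, 0 <= r -> m.1 r = 0%N) /\ (forall s : int, 1 <= s -> m.2 s = 0%N).

Definition inM1 (p : V) : Prop :=
  (exists s : seq mono, forall x, p x != 0 -> x \in s) /\
  (forall x, p x != 0 -> admissible x).

Definition mulA (r : int) (p : V) : V := fun x =>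
  if (0 < x.1 r)%N then p ([fsfun x.1 with r |-> (x.1 r).-1], x.2) else 0.
Definition mulS (s : int) (p : V) : V := fun x =>
  if (0 < x.2 s)%N then p (x.1, [fsfun x.2 with s |-> (x.2 s).-1]) else 0.
Definition derA (r : int) (p : V) : V := fun x =>
  (x.1 r).+1%:R * p ([fsfun x.1 with r |-> (x.1 r).+1], x.2).
Definition derS (s : int) (p : V) : V := fun x =>
  (x.2 s).+1%:R * p (x.1, [fsfun x.2 with s |-> (x.2 s).+1]).

Definition wvec : V := fun x => if x == zero_mono then 1 else 0.

Section Whittaker.
Variables (n m : nat) (lam : 'I_n.+1 -> C) (mu : 'I_m -> C).

(* lambda_i for i >= 0 (0 for i > n, and for i < 0 unused) *)
Definition lamx (i : int) : C :=
  match i with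
  | Posz k => match (insub k : option 'I_n.+1) with Some o => lam o | None => 0 end
  | Negz _ => 0
  end.
(* mu_j for j >= 1, with mu_j = mu (j-1) for 1 <= j <= m, 0 for j > m *)
Definition mux (j : int) : C :=
  match j with
  | Posz k.+1 => match (insub k : option 'I_m) with Some o => mu o | None => 0 end
  | _ => 0
  end.

Definition aop (r : int) (p : V) : V :=
  if 0 <= r then (fun x => lamx r * p x + derS (- r) p x) else mulA r p.
Definition asop (s : int) (p : V) : V :=
  if 1 <= s then (fun x => mux s * p x - derA (- s) p x) else mulS s p.

(* E_{i,j} = :a(-i) a*(j): *)
Definition Eop (i j : int) (p : V) : V :=
  if (0 <= - i) && (j <= 0) then asop j (aop (- i) p) else aop (- i) (asop j p).

Definition Ipart (N : nat) (p : V) : V := fun x =>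
  \sum_(k < (N + N).+1) Eop (k%:Z - N%:Z) (k%:Z - N%:Z) p x.

(* I = sum_{j in Z} E_{j,j}: the eventual value of the partial sums
   (which stabilize on M_1). *)
Definition Iop (p : V) : V :=
  epsilon (inhabits (fun _ => 0 : C))
    (fun u => exists N0 : nat, forall N : nat, (N0 <= N)%N -> Ipart N p = u).

Definition gen_submodule (G : V -> Prop) (v : V) : Prop :=
  forall S : V -> Prop,
    S (fun _ => 0) ->
    (forall x y, S x -> S y -> S (fun t => x t + y t)) ->
    (forall (c : C) x, S x -> S (fun t => c * x t)) ->
    (forall (i j : int) x, S x -> S (Eop i j x)) ->
    (forall g, G g -> S g) ->
    S v.

Definition Nd_gens (d : C) (g : V) : Prop :=
  exists k : nat, g = (fun t => Iop (iter k Iop wvec) t - d * iter k Iop wvec t).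

End Whittaker.

(* Main.v *)
Require Import Defs.
From HB Require Import structures.
From mathcomp Require Import all_boot all_algebra finmap.
From mathcomp Require Import complex Rstruct.
From Stdlib Require Import Classical ClassicalEpsilon FunctionalExtensionality.
From mathcomp Require Import ring zify.
Import GRing.Theory Num.Theory.
Local Open Scope ring_scope.

Definition key := (bool * int)%type.
Definition expv (x : mono) (k : key) : nat := (if k.1 then x.1 else x.2) k.2.
Definition upd (f : expo) (r : int) (v : nat) : expo := [fsfun f with r |-> v].
Definition setk (x : mono) (k : key) (v : nat) : mono :=
  if k.1 then (upd x.1 k.2 v, x.2) else (x.1, upd x.2 k.2 v).
Definition incm k x := setk x k (expv x k).+1.
Definition decm k x := setk x k (expv x k).-1.
Definition mulG (k : key) (p : V) : V := fun x =>
  if (0 < expv x k)%N then p (decm k x) else 0.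
Definition derG (k : key) (p : V) : V := fun x =>
  (expv x k).+1%:R * p (incm k x).

Lemma mulAE r : Defs.mulA r = mulG (true, r). Proof. by []. Qed.
Lemma mulSE r : Defs.mulS r = mulG (false, r). Proof. by []. Qed.
Lemma derAE r : Defs.derA r = derG (true, r). Proof. by []. Qed.
Lemma derSE r : Defs.derS r = derG (false, r). Proof. by []. Qed.

Lemma expv_set x k v k' : expv (setk x k v) k' = if k' == k then v else expv x k'.
Proof.
case: k k' => [[] r] [[] r']; rewrite /expv /setk /upd /= ?fsfun_withE //.
Qed.

Lemma mono_ext (x y : mono) : (forall k, expv x k = expv y k) -> x = y.
Proof.
case: x y => [x1 x2] [y1 y2] H.
have E1 : x1 = y1 by apply/fsfunP => r; exact: (H (true, r)).
have E2 : x2 = y2 by apply/fsfunP => r; exact: (H (false, r)).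
by rewrite E1 E2.
Qed.

Lemma expv_inc x k k' : expv (incm k x) k' = if k' == k then (expv x k).+1 else expv x k'.
Proof. exact: expv_set. Qed.
Lemma expv_dec x k k' : expv (decm k x) k' = if k' == k then (expv x k).-1 else expv x k'.
Proof. exact: expv_set. Qed.

Ltac kcase := repeat (case: eqP => //=; try (move=> ?; subst)); try congruence.

Lemma decK k x : decm k (incm k x) = x.
Proof. by apply: mono_ext => k'; rewrite !(expv_dec, expv_inc); kcase. Qed.

Lemma incK k x : (0 < expv x k)%N -> incm k (decm k x) = x.
Proof. by move=> H; apply: mono_ext => k'; rewrite !(expv_dec, expv_inc); kcase; rewrite prednK. Qed.

Lemma inc_inc k k' x : incm k (incm k' x) = incm k' (incm k x).
Proof. by apply: mono_ext => k''; rewrite !expv_inc; kcase. Qed.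
Lemma dec_dec k k' x : decm k (decm k' x) = decm k' (decm k x).
Proof. by apply: mono_ext => k''; rewrite !expv_dec; kcase. Qed.
Lemma inc_dec k k' x : k != k' -> incm k (decm k' x) = decm k' (incm k x).
Proof. move/eqP=> H; by apply: mono_ext => k''; rewrite !(expv_dec, expv_inc); kcase. Qed.

Lemma mulG_mulG k k' p : mulG k (mulG k' p) = mulG k' (mulG k p).
Proof.
apply: functional_extensionality => x; rewrite /mulG.
have [<-|ne] := eqVneq k k'; first by [].
rewrite !expv_dec (negbTE ne) eq_sym (negbTE ne) dec_dec.
by case: (0 < expv x k)%N; case: (0 < expv x k')%N.
Qed.

Lemma derG_derG k k' p : derG k (derG k' p) = derG k' (derG k p).
Proof.
apply: functional_extensionality => x; rewrite /derG.
have [<-|ne] := eqVneq k k'; first by [].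
rewrite !expv_inc (negbTE ne) eq_sym (negbTE ne) inc_inc.
by rewrite !mulrA [_ * (expv x k).+1%:R]mulrC.
Qed.

Lemma derG_mulG k k' p :
  derG k (mulG k' p) = fun x => mulG k' (derG k p) x + (if k == k' then p x else 0).
Proof.
apply: functional_extensionality => x; rewrite /mulG /derG.
have [<-|ne] := eqVneq k k'.
  rewrite expv_inc eqxx /= decK.
  case: (posnP (expv x k)) => [->|H].
    by rewrite mul1r add0r.
  rewrite expv_dec eqxx prednK // incK //.
  by rewrite -addn1 natrD mulrDl mul1r.
rewrite expv_inc eq_sym (negbTE ne) expv_dec (negbTE ne).
case: ifP => _; last by rewrite mulr0 add0r.
by rewrite addr0 inc_dec.
Qed.

Definition Lin (F : V -> V) :=
  forall (a : C) (p q : V), F (fun t => a * p t + q t) = (fun t => a * F p t + F q t).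

Lemma Lin_mulG k : Lin (mulG k).
Proof.
move=> a p q; apply: functional_extensionality => x; rewrite /mulG.
by case: ifP => _; rewrite ?mulr0 ?addr0.
Qed.

Lemma Lin_derG k : Lin (derG k).
Proof.
move=> a p q; apply: functional_extensionality => x; rewrite /derG.
by rewrite mulrDr mulrCA.
Qed.

Lemma Lin0 F : Lin F -> F (fun _ => 0) = (fun _ => 0).
Proof.
move=> L; have := L 1 (fun _ => 0) (fun _ => 0).
have -> : (fun t : mono => 1 * (fun _ : mono => 0 : C) t + (fun _ => 0) t) = (fun _ => 0).
  by apply: functional_extensionality => t; rewrite mul1r addr0.
move=> E; apply: functional_extensionality => t.
have H := congr1 (fun f => f t) E; simpl in H; rewrite mul1r in H.
by apply: (@addrI _ (F (fun _ => 0) t)); rewrite addr0 -H.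
Qed.

Lemma LinD F p q : Lin F -> F (fun t => p t + q t) = (fun t => F p t + F q t).
Proof.
move=> L; have := L 1 p q.
have -> : (fun t => 1 * p t + q t) = (fun t => p t + q t).
  by apply: functional_extensionality => t; rewrite mul1r.
move=> ->; apply: functional_extensionality => t; by rewrite mul1r.
Qed.

Lemma LinZ F a p : Lin F -> F (fun t => a * p t) = (fun t => a * F p t).
Proof.
move=> L; have := L a p (fun _ => 0).
have -> : (fun t => a * p t + (fun _ : mono => 0 : C) t) = (fun t => a * p t).
  by apply: functional_extensionality => t; rewrite addr0.
move=> ->; rewrite Lin0 //; apply: functional_extensionality => t; by rewrite addr0.
Qed.

Lemma LinB F p q : Lin F -> F (fun t => p t - q t) = (fun t => F p t - F q t).
Proof.
move=> L; have := L (-1) q p.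
have -> : (fun t => -1 * q t + p t) = (fun t => p t - q t).
  by apply: functional_extensionality => t; rewrite mulN1r addrC.
move=> ->; apply: functional_extensionality => t; by rewrite mulN1r addrC.
Qed.

Lemma LinS F I (r : seq I) (f : I -> V) : Lin F ->
  F (fun t => \sum_(i <- r) f i t) = (fun t => \sum_(i <- r) F (f i) t).
Proof.
move=> L; elim: r => [|i r IH].
  have -> : (fun t => \sum_(i <- [::]) f i t) = (fun _ => 0).
    by apply: functional_extensionality => t; rewrite big_nil.
  rewrite Lin0 //; apply: functional_extensionality => t; by rewrite big_nil.
have -> : (fun t => \sum_(j <- i :: r) f j t) = (fun t => f i t + \sum_(j <- r) f j t).
  by apply: functional_extensionality => t; rewrite big_cons.
rewrite (LinD _ _ _ L) IH; apply: functional_extensionality => t; by rewrite big_cons.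
Qed.

Lemma Lin_comp F G : Lin F -> Lin G -> Lin (fun p => F (G p)).
Proof. by move=> LF LG a p q; rewrite LG LF. Qed.

Lemma aopE n (lam : 'I_n.+1 -> C) r p : aop lam r p =
  if 0 <= r then (fun x => lamx lam r * p x + derG (false, -r) p x) else mulG (true, r) p.
Proof. by []. Qed.
Lemma asopE m (mu : 'I_m -> C) s p : asop mu s p =
  if 1 <= s then (fun x => mux mu s * p x - derG (true, -s) p x) else mulG (false, s) p.
Proof. by []. Qed.

Lemma Lin_aop n (lam : 'I_n.+1 -> C) r : Lin (aop lam r).
Proof.
move=> a p q; rewrite !aopE; case: ifP => _; last exact: Lin_mulG.
rewrite Lin_derG; apply: functional_extensionality => x /=.
by ring.
Qed.

Lemma Lin_asop m (mu : 'I_m -> C) s : Lin (asop mu s).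
Proof.
move=> a p q; rewrite !asopE; case: ifP => _; last exact: Lin_mulG.
rewrite (LinD _ _ _ (Lin_derG _)) (LinZ _ _ _ (Lin_derG _)).
apply: functional_extensionality => x /=.
by ring.
Qed.

Lemma aop_aop n (lam : 'I_n.+1 -> C) r r' p :
  aop lam r (aop lam r' p) = aop lam r' (aop lam r p).
Proof.
rewrite !aopE; case hr: (0 <= r); case hr': (0 <= r').
- rewrite !Lin_derG derG_derG; apply: functional_extensionality => x /=; ring.
- rewrite Lin_mulG derG_mulG; apply: functional_extensionality => x /=; ring.
- rewrite Lin_mulG derG_mulG; apply: functional_extensionality => x /=; ring.
- by rewrite mulG_mulG.
Qed.

Lemma asop_asop m (mu : 'I_m -> C) s s' p :
  asop mu s (asop mu s' p) = asop mu s' (asop mu s p).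
Proof.
rewrite !asopE; case hr: (1 <= s); case hr': (1 <= s').
- rewrite !(LinB _ _ _ (Lin_derG _)) !(LinZ _ _ _ (Lin_derG _)) derG_derG.
  apply: functional_extensionality => x /=; ring.
- rewrite !(LinB _ _ _ (Lin_mulG _)) !(LinZ _ _ _ (Lin_mulG _)) derG_mulG.
  apply: functional_extensionality => x /=; ring.
- rewrite !(LinB _ _ _ (Lin_mulG _)) !(LinZ _ _ _ (Lin_mulG _)) derG_mulG.
  apply: functional_extensionality => x /=; ring.
- by rewrite mulG_mulG.
Qed.

Lemma aop_asop n m (lam : 'I_n.+1 -> C) (mu : 'I_m -> C) r s p :
  aop lam r (asop mu s p) =
  (fun t => asop mu s (aop lam r p) t + (if r + s == 0 then p t else 0)).
Proof.
rewrite !aopE !asopE; case hr: (0 <= r); case hs: (1 <= s).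
- rewrite !(LinB _ _ _ (Lin_derG _)) !(LinZ _ _ _ (Lin_derG _)) !Lin_derG derG_derG.
  have -> : (r + s == 0) = false.
    by apply/negbTE/eqP => H; lia.
  apply: functional_extensionality => x /=; ring.
- rewrite Lin_mulG derG_mulG.
  have -> : ((false, - r) == (false, s)) = (r + s == 0).
    by rewrite xpair_eqE /=; apply/eqP/eqP => H; lia.
  apply: functional_extensionality => x /=; ring.
- rewrite !(LinB _ _ _ (Lin_mulG _)) !(LinZ _ _ _ (Lin_mulG _)) derG_mulG.
  have -> : ((true, - s) == (true, r)) = (r + s == 0).
    by rewrite xpair_eqE /=; apply/eqP/eqP => H; lia.
  apply: functional_extensionality => x /=; ring.
- rewrite mulG_mulG.
  have -> : (r + s == 0) = false.
    by apply/negbTE/eqP => H; lia.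
  apply: functional_extensionality => x /=; ring.
Qed.

Definition dl (b : bool) : C := if b then 1 else 0.

Lemma asop_aop n m (lam : 'I_n.+1 -> C) (mu : 'I_m -> C) s r p :
  asop mu s (aop lam r p) =
  (fun t => aop lam r (asop mu s p) t - dl (r + s == 0) * p t).
Proof.
rewrite aop_asop; apply: functional_extensionality => t /=; rewrite /dl.
by case: ifP => _; ring.
Qed.

Lemma aop_asop' n m (lam : 'I_n.+1 -> C) (mu : 'I_m -> C) r s p :
  aop lam r (asop mu s p) =
  (fun t => asop mu s (aop lam r p) t + dl (r + s == 0) * p t).
Proof.
rewrite aop_asop; apply: functional_extensionality => t /=; rewrite /dl.
by case: ifP => _; ring.
Qed.

Definition Xop {n m} (lam : 'I_n.+1 -> C) (mu : 'I_m -> C) i j p :=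
  aop lam (- i) (asop mu j p).

Lemma EopX n m (lam : 'I_n.+1 -> C) (mu : 'I_m -> C) i j p :
  Eop lam mu i j p = (fun t => Xop lam mu i j p t
     - dl ((0 <= - i) && (j <= 0) && (- i + j == 0)) * p t).
Proof.
rewrite /Eop /Xop; case: ifP => c.
  rewrite asop_aop; apply: functional_extensionality => t /=; by [].
by apply: (@functional_extensionality mono C) => t /=; rewrite /dl mul0r subr0.
Qed.

Lemma Xop_comm n m (lam : 'I_n.+1 -> C) (mu : 'I_m -> C) i j k p :
  Xop lam mu i j (Xop lam mu k k p) =
  (fun t => Xop lam mu k k (Xop lam mu i j p) t
     + (dl (i == k) - dl (j == k)) * Xop lam mu i j p t).
Proof.
rewrite /Xop (@asop_aop _ _ lam mu j (-k)).
rewrite (LinB _ _ _ (Lin_aop _ _ _)) (LinZ _ _ _ (Lin_aop _ _ _)).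
rewrite aop_aop asop_asop (@aop_asop' _ _ lam mu (-i) k).
rewrite (LinD _ _ _ (Lin_aop _ _ _)) (LinZ _ _ _ (Lin_aop _ _ _)).
apply: functional_extensionality => t /=.
have [ejk|njk] := eqVneq j k; have [eik|nik] := eqVneq i k.
- subst; ring.
- rewrite -ejk /dl addNr eqxx.
  have -> : (- i + j == 0) = false by apply/negbTE/eqP => H; apply/eqP: nik; lia.
  ring.
- rewrite -eik /dl addNr eqxx.
  have -> : (- i + j == 0) = false by apply/negbTE/eqP => H; apply/eqP: njk; lia.
  ring.
- rewrite /dl.
  have -> : (- i + k == 0) = false by apply/negbTE/eqP => H; apply/eqP: nik; lia.
  have -> : (- k + j == 0) = false by apply/negbTE/eqP => H; apply/eqP: njk; lia.
  ring.
Qed.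

Lemma Lin_Xop n m (lam : 'I_n.+1 -> C) (mu : 'I_m -> C) i j : Lin (Xop lam mu i j).
Proof. exact: Lin_comp _ _ (Lin_aop _ _ _) (Lin_asop _ _ _). Qed.

Lemma Lin_Eop n m (lam : 'I_n.+1 -> C) (mu : 'I_m -> C) i j : Lin (Eop lam mu i j).
Proof.
rewrite /Eop; case: ((0 <= - i) && (j <= 0)).
  exact: (Lin_comp _ _ (Lin_asop _ _ _) (Lin_aop _ _ _)).
exact: (Lin_comp _ _ (Lin_aop _ _ _) (Lin_asop _ _ _)).
Qed.

Lemma Eop_comm n m (lam : 'I_n.+1 -> C) (mu : 'I_m -> C) i j k p :
  Eop lam mu i j (Eop lam mu k k p) =
  (fun t => Eop lam mu k k (Eop lam mu i j p) t
     + (dl (i == k) - dl (j == k)) * Xop lam mu i j p t).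
Proof.
rewrite ![Eop lam mu _ _ _]EopX.
rewrite (LinB _ _ _ (Lin_Xop _ _ _ _ _ _)) (LinZ _ _ _ (Lin_Xop _ _ _ _ _ _)).
rewrite (LinB _ _ _ (Lin_Xop _ _ _ _ _ _)) (LinZ _ _ _ (Lin_Xop _ _ _ _ _ _)).
rewrite Xop_comm; apply: functional_extensionality => t /=; ring.
Qed.

Definition badk (k : key) : bool := if k.1 then 0 <= k.2 else 1 <= k.2.

Lemma admE x : admissible x <-> forall k, badk k -> expv x k = 0%N.
Proof.
split.
  by case=> H1 H2 [[] r] /= b; [exact: H1 | exact: H2].
by move=> H; split => r hr; [exact: (H (true, r)) | exact: (H (false, r))].
Qed.

Lemma inM1_cover p1 p2 q : inM1 p1 -> inM1 p2 ->
  (forall x, q x != 0 -> p1 x != 0 \/ p2 x != 0) -> inM1 q.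
Proof.
move=> [[s1 H1] A1] [[s2 H2] A2] H; split.
  exists (s1 ++ s2) => x /H [] h; rewrite mem_cat; apply/orP; [left; exact: H1 | right; exact: H2].
by move=> x /H [] h; [exact: A1 | exact: A2].
Qed.

Lemma inM1_0 : inM1 (fun _ => 0).
Proof. by split; [exists [::] => x; rewrite eqxx | move=> x; rewrite eqxx]. Qed.

Lemma inM1_lin a p q : inM1 p -> inM1 q -> inM1 (fun t => a * p t + q t).
Proof.
move=> Hp Hq; apply: inM1_cover Hp Hq _ => x.
case: (eqVneq (p x) 0) => [->|]; last by left.
by rewrite mulr0 add0r; right.
Qed.

Lemma inM1_mulG k p : ~~ badk k -> inM1 p -> inM1 (mulG k p).
Proof.
move=> bk [[s H] A]; split.
  exists (map (incm k) s) => x; rewrite /mulG; case: ifP => [hx hp|]; last by rewrite eqxx.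
  by apply/mapP; exists (decm k x); [exact: H | rewrite incK].
move=> x; rewrite /mulG; case: ifP => [hx hp|]; last by rewrite eqxx.
have := A _ hp; rewrite !admE => Ad k' bk'.
have ne : k' != k by apply: contraNneq bk => <-.
by have := Ad k' bk'; rewrite expv_dec (negbTE ne).
Qed.

Lemma inM1_derG k p : inM1 p -> inM1 (derG k p).
Proof.
move=> [[s H] A].
have nz x : derG k p x != 0 -> p (incm k x) != 0.
  by rewrite /derG; apply: contraNneq => ->; rewrite mulr0.
split.
  exists (map (decm k) s) => x /nz hp.
  by apply/mapP; exists (incm k x); [exact: H | rewrite decK].
move=> x /nz hp; have := A _ hp; rewrite !admE => Ad k' bk'.
by have := Ad k' bk'; rewrite expv_inc; case: eqP.
Qed.

Lemma inM1_aop n (lam : 'I_n.+1 -> C) r p : inM1 p -> inM1 (aop lam r p).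
Proof.
move=> Hp; rewrite aopE; case: ifP => hr.
  by apply: inM1_lin => //; exact: inM1_derG.
by apply: inM1_mulG => //; rewrite /badk /= hr.
Qed.

Lemma inM1_asop m (mu : 'I_m -> C) s p : inM1 p -> inM1 (asop mu s p).
Proof.
move=> Hp; rewrite asopE; case: ifP => hs.
  have H2 := inM1_lin (-1) _ _ (inM1_derG (true, - s) _ Hp) inM1_0.
  apply: inM1_cover Hp H2 _ => x.
  case: (eqVneq (p x) 0) => [->|]; last by left.
  by rewrite mulr0 add0r oppr_eq0 => h; right; rewrite addr0 mulN1r oppr_eq0.
by apply: inM1_mulG => //; rewrite /badk /= hs.
Qed.

Lemma inM1_Eop n m (lam : 'I_n.+1 -> C) (mu : 'I_m -> C) i j p :
  inM1 p -> inM1 (Eop lam mu i j p).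
Proof.
move=> Hp; rewrite /Eop; case: ifP => _.
  by apply: inM1_asop; apply: inM1_aop.
by apply: inM1_aop; apply: inM1_asop.
Qed.

Lemma inM1_sum I (r : seq I) (f : I -> V) :
  (forall i, inM1 (f i)) -> inM1 (fun t => \sum_(i <- r) f i t).
Proof.
move=> H; elim: r => [|i r IH].
  by have -> : (fun t => \sum_(i <- [::]) f i t) = (fun _ => 0);
    [apply: functional_extensionality => t; rewrite big_nil | exact: inM1_0].
have -> : (fun t => \sum_(j <- i :: r) f j t) = (fun t => 1 * f i t + \sum_(j <- r) f j t).
  by apply: functional_extensionality => t; rewrite big_cons mul1r.
exact: inM1_lin.
Qed.

Lemma inM1_Ipart n m (lam : 'I_n.+1 -> C) (mu : 'I_m -> C) N p :
  inM1 p -> inM1 (Ipart lam mu N p).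
Proof. move=> Hp; apply: inM1_sum => i; exact: inM1_Eop. Qed.

Definition bnd (x : mono) : nat :=
  maxn (\max_(r <- finsupp x.1) `|r|%N) (\max_(r <- finsupp x.2) `|r|%N).

Lemma bnd_spec x k : expv x k != 0%N -> (`|k.2| <= bnd x)%N.
Proof.
case: k => [[] r] /= h; rewrite /bnd leq_max; apply/orP; [left|right];
  apply: leq_bigmax_seq => //; by rewrite mem_finsupp.
Qed.

Lemma fs_bound p : inM1 p -> exists B, forall x, p x != 0 ->
  forall k, (B < `|k.2|)%N -> expv x k = 0%N.
Proof.
case=> [[s H] _]; exists (\max_(x <- s) bnd x) => x hx k hk.
apply/eqP; apply: contraTT hk => e; rewrite -leqNgt.
apply: (leq_trans (bnd_spec _ _ e)); exact: (leq_bigmax_seq x (H _ hx)).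
Qed.

Lemma lamx_far n (lam : 'I_n.+1 -> C) i : (n < `|i|)%N -> lamx lam i = 0.
Proof.
case: i => [k|k] //= h; rewrite insubF //; by rewrite ltnNge h.
Qed.

Lemma mux_far m (mu : 'I_m -> C) j : (m < `|j|)%N -> mux mu j = 0.
Proof.
case: j => [[|k]|k] //= h; rewrite insubF //; by rewrite ltnNge -ltnS h.
Qed.

Lemma Eop_far n m (lam : 'I_n.+1 -> C) (mu : 'I_m -> C) p B k :
  (forall x, p x != 0 -> forall k, (B < `|k.2|)%N -> expv x k = 0%N) ->
  (maxn B (maxn n m) < `|k|)%N -> Eop lam mu k k p = (fun _ => 0).
Proof.
move=> HB hk.
have hB : (B < `|k|)%N by lia.
have hn : (n < `|k|)%N by lia.
have hm : (m < `|k|)%N by lia.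
have Z x k' : (B < `|k'.2|)%N -> (0 < expv x k')%N -> p x = 0.
  move=> h1 h2; apply/eqP; apply: contraTT h2 => /HB /(_ k' h1) ->; by [].
rewrite /Eop; have [hk0|hk0] := boolP (0 <= - k).
  have hk1 : (k <= 0) by rewrite -oppr_ge0.
  rewrite hk1 /= asopE aopE ?hk0 opprK.
  have -> : (1 <= k) = false by apply/negbTE; move: hk1 => h; apply/negP => h2; lia.
  apply: functional_extensionality => y; rewrite /mulG; case: ifP => // hy.
  rewrite lamx_far ?abszN // mul0r add0r /derG incK //.
  by rewrite (Z y (false, k)) // mulr0.
rewrite /= aopE asopE ?(negbTE hk0).
have -> : (1 <= k) = true.
  by move: hk0 => h; apply/idP; move/negP: h => h; lia.
apply: functional_extensionality => y; rewrite /mulG; case: ifP => // hy.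
rewrite mux_far // mul0r sub0r /derG incK //.
by rewrite (Z y (true, - k)) ?abszN // mulr0 oppr0.
Qed.

Lemma Ipart_sumE n m (lam : 'I_n.+1 -> C) (mu : 'I_m -> C) N p x :
  Ipart lam mu N p x =
  \sum_(0 <= k < (N + N).+1) Eop lam mu (k%:Z - N%:Z) (k%:Z - N%:Z) p x.
Proof. by rewrite /Ipart big_mkord. Qed.

Lemma Ipart_step n m (lam : 'I_n.+1 -> C) (mu : 'I_m -> C) N p :
  Eop lam mu (N.+1)%:Z (N.+1)%:Z p = (fun _ => 0) ->
  Eop lam mu (- (N.+1)%:Z) (- (N.+1)%:Z) p = (fun _ => 0) ->
  Ipart lam mu N.+1 p = Ipart lam mu N p.
Proof.
move=> E1 E2; apply: functional_extensionality => x; rewrite !Ipart_sumE.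
have -> : (N.+1 + N.+1).+1 = ((N + N).+1).+2 by lia.
rewrite big_nat_recl // big_nat_recr //=.
have -> : (0%:Z - (N.+1)%:Z) = - (N.+1)%:Z by rewrite sub0r.
have -> : (((N + N).+1).+1%:Z - (N.+1)%:Z) = (N.+1)%:Z by lia.
rewrite E1 E2 addr0 add0r; apply: eq_bigr => i _.
by have -> : (i.+1%:Z - (N.+1)%:Z) = (i%:Z - N%:Z) by lia.
Qed.

Lemma Ipart_stable n m (lam : 'I_n.+1 -> C) (mu : 'I_m -> C) p : inM1 p ->
  exists B, forall N, (B <= N)%N -> Ipart lam mu N p = Ipart lam mu B p.
Proof.
move=> /fs_bound [B0 HB0]; exists (maxn B0 (maxn n m)) => N hN.
rewrite -(subnKC hN); elim: (N - _)%N => [|d IH]; first by rewrite addn0.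
rewrite addnS Ipart_step ?IH //; apply: (Eop_far _ _ lam mu p B0 _ HB0).
  by rewrite absz_nat; lia.
by rewrite abszN absz_nat; lia.
Qed.

Lemma IopE n m (lam : 'I_n.+1 -> C) (mu : 'I_m -> C) p : inM1 p ->
  exists B, forall N, (B <= N)%N -> Iop lam mu p = Ipart lam mu N p.
Proof.
move=> /(Ipart_stable _ _ lam mu) [B HB]; rewrite /Iop.
set P := (fun u : V => exists N0 : nat, forall N : nat, (N0 <= N)%N -> Ipart lam mu N p = u).
have ex : exists u, P u by exists (Ipart lam mu B p); exists B.
have [N1 HN1] := epsilon_spec (inhabits (fun _ => 0 : C)) P ex.
exists B => N hN.
rewrite -(HN1 (maxn N N1)) ?leq_maxr // HB ?(leq_trans hN) ?leq_maxl //.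
by rewrite HB.
Qed.

Lemma Lin_Ipart n m (lam : 'I_n.+1 -> C) (mu : 'I_m -> C) N : Lin (Ipart lam mu N).
Proof.
move=> a p q; apply: functional_extensionality => x; rewrite /Ipart mulr_sumr -big_split.
by apply: eq_bigr => k _; rewrite Lin_Eop.
Qed.

Lemma inM1_Iop n m (lam : 'I_n.+1 -> C) (mu : 'I_m -> C) p : inM1 p -> inM1 (Iop lam mu p).
Proof. move=> Hp; have [B HB] := IopE _ _ lam mu _ Hp; rewrite (HB B) //; exact: inM1_Ipart. Qed.

Lemma Iop_lin n m (lam : 'I_n.+1 -> C) (mu : 'I_m -> C) a p q : inM1 p -> inM1 q ->
  Iop lam mu (fun t => a * p t + q t) = (fun t => a * Iop lam mu p t + Iop lam mu q t).
Proof.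
move=> Hp Hq; have Hpq := inM1_lin a _ _ Hp Hq.
have [B1 H1] := IopE _ _ lam mu _ Hp; have [B2 H2] := IopE _ _ lam mu _ Hq.
have [B3 H3] := IopE _ _ lam mu _ Hpq.
set N := maxn B1 (maxn B2 B3).
rewrite (H1 N) ?(H2 N) ?(H3 N) ?Lin_Ipart //; rewrite /N; lia.
Qed.

Lemma Iop0 n m (lam : 'I_n.+1 -> C) (mu : 'I_m -> C) : Iop lam mu (fun _ => 0) = (fun _ => 0).
Proof.
have [B HB] := IopE _ _ lam mu _ inM1_0; rewrite (HB B) //; exact: Lin0 (Lin_Ipart _ _ _ _ _).
Qed.

Lemma sum_dl N i : (`|i| <= N)%N ->
  \sum_(k < (N + N).+1) dl (i == k%:Z - N%:Z) = 1.
Proof.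
move=> hi.
have hk0 : (`|(i + N%:Z)%R| < (N + N).+1)%N by lia.
rewrite (bigD1 (Ordinal hk0)) //=.
have -> : (i == `|i + N%:Z|%:Z - N%:Z) = true by apply/eqP; lia.
rewrite big1 ?addr0 // => k /eqP hne.
have -> : (i == k%:Z - N%:Z) = false.
  apply/negbTE/eqP => h; apply: hne; apply: val_inj => /=; lia.
by [].
Qed.

Lemma Eop_Iop n m (lam : 'I_n.+1 -> C) (mu : 'I_m -> C) i j p : inM1 p ->
  Eop lam mu i j (Iop lam mu p) = Iop lam mu (Eop lam mu i j p).
Proof.
move=> Hp; have HE := inM1_Eop _ _ lam mu i j _ Hp.
have [B1 H1] := IopE _ _ lam mu _ Hp; have [B2 H2] := IopE _ _ lam mu _ HE.
set N := maxn (maxn B1 B2) (maxn `|i| `|j|).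
rewrite (H1 N) ?(H2 N); try (rewrite /N; lia).
rewrite /Ipart (LinS _ _ _ _ (Lin_Eop _ _ _ _ _ _)).
apply: functional_extensionality => t.
under eq_bigr => k _ do rewrite Eop_comm.
rewrite big_split /= -mulr_suml sumrB !sum_dl; try (rewrite /N; lia).
by rewrite subrr mul0r addr0.
Qed.

Lemma expv0 k : expv zero_mono k = 0%N.
Proof. case: k => [[] r]; rewrite /expv /zero_mono /=; by rewrite fsfunE. Qed.

Lemma inM1_w : inM1 wvec.
Proof.
split.
  by exists [:: zero_mono] => x; rewrite /wvec; case: (x =P zero_mono) => [->|]; rewrite ?inE ?eqxx.
move=> x; rewrite /wvec; case: (x =P zero_mono) => [-> _|]; last by rewrite eqxx.
by apply/admE => k _; rewrite expv0.
Qed.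

Lemma inM1_iter n m (lam : 'I_n.+1 -> C) (mu : 'I_m -> C) k :
  inM1 (iter k (Iop lam mu) wvec).
Proof. elim: k => [|k IH] /=; [exact: inM1_w | exact: inM1_Iop]. Qed.

Lemma Iop_scale n m (lam : 'I_n.+1 -> C) (mu : 'I_m -> C) a p : inM1 p ->
  Iop lam mu (fun t => a * p t) = (fun t => a * Iop lam mu p t).
Proof.
move=> Hp; have := Iop_lin _ _ lam mu a _ _ Hp inM1_0.
have -> : (fun t => a * p t + (fun _ => 0 : C) t) = (fun t => a * p t).
  by apply: functional_extensionality => t; rewrite addr0.
move=> ->; rewrite Iop0; apply: functional_extensionality => t; by rewrite addr0.
Qed.

Lemma Eop_w n m (lam : 'I_n.+1 -> C) (mu : 'I_m -> C) (i j : nat) : (1 <= j)%N ->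
  Eop lam mu (- (i%:Z)) (j%:Z) wvec = (fun t => lamx lam i%:Z * mux mu j%:Z * wvec t).
Proof.
move=> hj; rewrite /Eop opprK.
have -> : (j%:Z <= 0) = false by apply/negbTE; apply/negP; lia.
rewrite andbF aopE asopE.
have -> : (1 <= j%:Z) = true by apply/idP; lia.
rewrite (_ : 0 <= i%:Z) //.
have dW k : derG k wvec = (fun _ => 0).
  apply: functional_extensionality => y.
  rewrite /derG /wvec; case: (incm k y =P zero_mono) => [e|]; last by rewrite mulr0.
  by have := expv0 k; rewrite -e expv_inc eqxx.
rewrite (LinB _ _ _ (Lin_derG _)) (LinZ _ _ _ (Lin_derG _)) !dW.
apply: functional_extensionality => x; rewrite /derG; ring.
Qed.

Lemma Eop_iter n m (lam : 'I_n.+1 -> C) (mu : 'I_m -> C) (i j : nat) k : (1 <= j)%N ->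
  Eop lam mu (- (i%:Z)) (j%:Z) (iter k (Iop lam mu) wvec)
  = (fun t => lamx lam i%:Z * mux mu j%:Z * iter k (Iop lam mu) wvec t).
Proof.
move=> hj; elim: k => [|k IH]; first exact: Eop_w.
rewrite iterS Eop_Iop; last exact: inM1_iter.
rewrite IH Iop_scale //; exact: inM1_iter.
Qed.
Lemma key_lemma n m (lam : 'I_n.+1 -> C) (mu : 'I_m -> C) (j0 : 'I_m) p d :
  mu j0 != 0 -> inM1 p -> (exists x, p x != 0) ->
  exists y, y != zero_mono /\ Iop lam mu p y - d * p y != 0.
Proof.
move=> hmu Hp [x1 hx1].
pose j : int := (j0.+1)%:Z.
pose kz : key := (true, - j).
have [[s Hs] _] := Hp.
pose P := fun e => has (fun x => (p x != 0) && (expv x kz == e)) s.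
have exP : exists e, P e.
  by exists (expv x1 kz); apply/hasP; exists x1; [exact: Hs | rewrite hx1 eqxx].
have bndP : forall e, P e -> (e <= \max_(x <- s) expv x kz)%N.
  move=> e /hasP [x xs /andP [_ /eqP <-]]; exact: leq_bigmax_seq.
have [e Pe maxe] := ex_maxnP exP bndP.
have [x0 _ /andP [hx0 /eqP ex0]] := hasP Pe.
have Z z : (e < expv z kz)%N -> p z = 0.
  move=> h; apply/eqP; apply: contraTT h => hz; rewrite -leqNgt; apply: maxe.
  by apply/hasP; exists z; [exact: Hs | rewrite hz eqxx].
pose y := incm kz x0.
have ey : expv y kz = e.+1 by rewrite /y expv_inc eqxx ex0.
have py : p y = 0 by apply: Z; rewrite ey.
have Ek kk : Eop lam mu kk kk p y = dl (j == kk) * (mux mu j * p x0).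
  rewrite /Eop; have [hk|hk] := boolP (1 <= kk).
    have -> : (0 <= - kk) = false by apply/negbTE/negP => h; lia.
    rewrite /= aopE asopE.
    have -> : (0 <= - kk) = false by apply/negbTE/negP => h; lia.
    rewrite hk /mulG /derG.
    have [ejk|njk] := eqVneq j kk.
      rewrite -ejk -/kz ey /y decK -/y py /dl.
      by rewrite mulr0 subr0 mul1r.
    rewrite /dl mul0r; case: ifP => // h.
    rewrite incK // py mulr0 subr0 Z ?mulr0 //.
    rewrite expv_dec.
    have -> : (kz == (true, - kk)) = false.
      by apply/negbTE; apply/eqP => -[h']; move/eqP: njk; apply; lia.
    by rewrite ey.
  have hk0 : (0 <= - kk) by move/negP: hk => hk; apply/idP; lia.
  have hk1 : (kk <= 0) by move/negP: hk => hk; apply/idP; lia.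
  rewrite hk0 hk1 /= asopE aopE (negbTE hk) hk0 opprK /mulG /derG.
  have -> : (j == kk) = false by apply/negbTE/negP => /eqP h; move/negP: hk; apply; rewrite -h /j.
  rewrite /dl mul0r; case: ifP => // h.
  rewrite incK // py mulr0 addr0 Z ?mulr0 //.
  by rewrite expv_dec /kz /= ey.
exists y; split.
  by apply/eqP => h; have := expv0 kz; rewrite -h ey.
have [B HB] := IopE _ _ lam mu _ Hp.
rewrite (HB (maxn B `|j|)) ?leq_maxl // py mulr0 subr0 /Ipart.
under eq_bigr do rewrite Ek.
rewrite -mulr_suml sum_dl ?leq_maxr // mul1r.
have -> : mux mu j = mu j0 by rewrite /j /mux /= valK.
exact: mulf_neq0.
Qed.

Lemma inM1_scale a p : inM1 p -> inM1 (fun t => a * p t).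
Proof.
move=> Hp; have := inM1_lin a _ _ Hp inM1_0.
have -> : (fun t => a * p t + (fun _ => 0 : C) t) = (fun t => a * p t) => //.
by apply: functional_extensionality => t; rewrite addr0.
Qed.

Lemma inM1_add p q : inM1 p -> inM1 q -> inM1 (fun t => p t + q t).
Proof.
move=> Hp Hq; have := inM1_lin 1 _ _ Hp Hq.
have -> : (fun t => 1 * p t + q t) = (fun t => p t + q t) => //.
by apply: functional_extensionality => t; rewrite mul1r.
Qed.

Theorem lemma6p2 (n m : nat) (lam : 'I_n.+1 -> C) (mu : 'I_m -> C) :
  (1 <= m)%N ->
  (exists i, lam i != 0) ->
  (exists j, mu j != 0) ->
  (* (1) *)
  (forall k : nat, (1 <= k)%N ->
     (forall (i j : nat), (1 <= j)%N ->
        Eop lam mu (- (i%:Z)) (j%:Z) (iter k (Iop lam mu) wvec)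
        = (fun t => lamx lam i%:Z * mux mu j%:Z * iter k (Iop lam mu) wvec t))
     /\ ~ (exists c : C, iter k (Iop lam mu) wvec = (fun t => c * wvec t)))
  /\
  (* (2) *)
  (forall d : C,
     (forall v, gen_submodule lam mu (Nd_gens lam mu d) v -> inM1 v) /\
     (exists v, inM1 v /\ ~ gen_submodule lam mu (Nd_gens lam mu d) v)).
Proof.
move=> hm _ [j0 hj0]; split.
  move=> k hk; split.
    by move=> i j hj; exact: Eop_iter.
  have nz : forall k, exists x, iter k (Iop lam mu) wvec x != 0.
    elim=> [|k' IH]; first by exists zero_mono; rewrite /= /wvec eqxx oner_eq0.
    have [y [_ hy]] := key_lemma _ _ lam mu j0 _ 0 hj0 (inM1_iter _ _ lam mu k') IH.
    by exists y; rewrite iterS; rewrite mul0r subr0 in hy.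
  case: k hk => // k' _ [c hc].
  have [y [hy0 hy]] := key_lemma _ _ lam mu j0 _ 0 hj0 (inM1_iter _ _ lam mu k') (nz k').
  move: hy; rewrite mul0r subr0 -iterS hc /wvec (negbTE hy0) mulr0 eqxx.
  by [].
move=> d; split.
  move=> v H; apply: H.
  - exact: inM1_0.
  - by move=> x y hx hy; exact: inM1_add.
  - by move=> c x hx; exact: inM1_scale.
  - by move=> i j x hx; exact: inM1_Eop.
  - move=> g [k ->]; have h1 := inM1_iter _ _ lam mu k.
    have h2 := inM1_Iop _ _ lam mu _ h1.
    have := inM1_add _ _ h2 (inM1_scale (- d) _ h1).
    have -> : (fun t => Iop lam mu (iter k (Iop lam mu) wvec) t
                 + - d * iter k (Iop lam mu) wvec t)
               = (fun t => Iop lam mu (iter k (Iop lam mu) wvec) t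
                 - d * iter k (Iop lam mu) wvec t) => //.
    by apply: functional_extensionality => t; rewrite mulNr.
exists wvec; split; first exact: inM1_w.
move=> H.
pose S := fun v => exists u, inM1 u /\ v = (fun t => Iop lam mu u t - d * u t).
have : S wvec.
  apply: H.
  - exists (fun _ => 0); split; first exact: inM1_0.
    rewrite Iop0; apply: functional_extensionality => t; ring.
  - move=> x y [u1 [h1 ->]] [u2 [h2 ->]]; exists (fun t => u1 t + u2 t); split.
      exact: inM1_add.
    have := Iop_lin _ _ lam mu 1 _ _ h1 h2.
    have -> : (fun t => 1 * u1 t + u2 t) = (fun t => u1 t + u2 t).
      by apply: functional_extensionality => t; rewrite mul1r.
    move=> ->; apply: functional_extensionality => t; ring.
  - move=> c x [u [h ->]]; exists (fun t => c * u t); split.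
      exact: inM1_scale.
    rewrite Iop_scale //; apply: functional_extensionality => t; ring.
  - move=> i j x [u [h ->]]; exists (Eop lam mu i j u); split.
      exact: inM1_Eop.
    rewrite (LinB _ _ _ (Lin_Eop _ _ _ _ _ _)) (LinZ _ _ _ (Lin_Eop _ _ _ _ _ _)).
    by rewrite Eop_Iop.
  - move=> g [k ->]; exists (iter k (Iop lam mu) wvec); split => //.
    exact: inM1_iter.
move=> [u [hu hw]].
have [[x hx]|nzu] := classic (exists x, u x != 0).
  have [y [hy0 hy]] := key_lemma _ _ lam mu j0 _ d hj0 hu (ex_intro _ x hx).
  move: hy; have := congr1 (fun f => f y) hw => /= <-.
  by rewrite /wvec (negbTE hy0) eqxx.
have u0 : u = (fun _ => 0).
  apply: functional_extensionality => x; apply/eqP; apply/negPn/negP => h.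
  by apply: nzu; exists x.
move: hw; rewrite u0 Iop0 => hw.
have := congr1 (fun f => f zero_mono) hw => /=.
by rewrite /wvec eqxx mulr0 subr0 => /eqP; rewrite oner_eq0.
Qed.
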